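(* Let $R$ be a commutative Noetherian ring of prime characteristic $p$, suppose $c$ is a $p^{w_0}$-weak test element for $R$, and let $\mathfrak{a}$ be an ideal of $R$. Let $H(\mathfrak{a})=\bigoplus_{n\ge0}R/\mathfrak{a}^{[p^n]}$ and $G(\mathfrak{a})=\bigoplus_{n\ge0}R/(\mathfrak{a}^{[p^n]})^F$ be the graded left $R[x,f]$-modules in which $x$ sends the class of $r$ in degree $n$ to the class of $r^p$ in degree $n+1$. Then (i) $\operatorname{ann}_{H(\mathfrak{a})}(\bigoplus_{n\ge w_0}Rcx^n)=\bigoplus_{n\ge0}(\mathfrak{a}^{[p^n]})^*/\mathfrak{a}^{[p^n]}$; (ii) $\operatorname{ann}_{G(\mathfrak{a})}(\bigoplus_{n\ge0}Rcx^n)=\bigoplus_{n\ge0}(\mathfrak{a}^{[p^n]})^*/(\mathfrak{a}^{[p^n]})^F$.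
   Context: $R[x,f]$ is the Frobenius skew polynomial ring: free left $R$-module on $(x^i)_{i\ge0}$, $xr=r^px$. For a subset $\mathfrak{B}$ of $R[x,f]$, $\operatorname{ann}_M\mathfrak{B}=\{m\in M:\theta m=0\ \forall\theta\in\mathfrak{B}\}$. $\mathfrak{a}^{[p^n]}$ is generated by $p^n$-th powers of elements of $\mathfrak{a}$; $\mathfrak{a}^F=\{r: r^{p^n}\in\mathfrak{a}^{[p^n]}\text{ for some }n\}$ (Frobenius closure); $R^\circ$ the complement of the union of minimal primes; $\mathfrak{a}^*$ tight closure. A $p^{w_0}$-weak test element is $c\in R^\circ$ such that for every ideal $\mathfrak{b}$ and $r\in R$: $r\in\mathfrak{b}^*$ iff $cr^{p^n}\in\mathfrak{b}^{[p^n]}$ for all $n\ge w_0$. *)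

(* Defs.v *)
From HB Require Import structures.
From mathcomp Require Import all_boot all_order all_algebra.
Set Implicit Arguments. Unset Strict Implicit. Unset Printing Implicit Defensive.
Import GRing.Theory.
Local Open Scope ring_scope.

Section CharPDefs.
Variable R : comNzRingType.

Definition is_ideal (I : R -> Prop) : Prop :=
  [/\ I 0, (forall x y, I x -> I y -> I (x + y)) & (forall r x, I x -> I (r * x))].

Definition noetherian : Prop :=
  forall I : nat -> R -> Prop,
    (forall n, is_ideal (I n)) -> (forall n x, I n x -> I n.+1 x) ->
    exists N, forall n, (N <= n)%N -> forall x, I n x -> I N x.

Definition ideal_gen (S : R -> Prop) : R -> Prop :=
  fun x => exists s : seq (R * R),
    (forall u, u \in s -> S u.2) /\ x = \sum_(u <- s) u.1 * u.2.

Definition frob_pow (a : R -> Prop) (q : nat) : R -> Prop :=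
  ideal_gen (fun y => exists r, a r /\ y = r ^+ q).

Definition frob_closure (p : nat) (a : R -> Prop) : R -> Prop :=
  fun r => exists n, frob_pow a (p ^ n) (r ^+ (p ^ n)).

Definition is_prime_ideal (P : R -> Prop) : Prop :=
  [/\ is_ideal P, ~ P 1 & forall x y, P (x * y) -> P x \/ P y].

Definition is_minimal_prime (P : R -> Prop) : Prop :=
  is_prime_ideal P /\
  forall Q, is_prime_ideal Q -> (forall x, Q x -> P x) -> forall x, P x -> Q x.

Definition Rcirc (c : R) : Prop := forall P, is_minimal_prime P -> ~ P c.

Definition tight_closure (p : nat) (a : R -> Prop) : R -> Prop :=
  fun r => exists c, Rcirc c /\ exists n0, forall n, (n0 <= n)%N ->
    frob_pow a (p ^ n) (c * r ^+ (p ^ n)).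

Definition weak_test_element (p w0 : nat) (c : R) : Prop :=
  Rcirc c /\ forall (b : R -> Prop) (r : R), is_ideal b ->
    (tight_closure p b r <->
       forall n, (w0 <= n)%N -> frob_pow b (p ^ n) (c * r ^+ (p ^ n))).

(* Elements of the Frobenius skew polynomial ring R[x,f] are represented by
   their coefficient lists: theta = \sum_i theta`_i x^i.
   Elements of the graded modules H(a), G(a) are represented by sequences of
   representatives: m = \sum_k [m`_k] in degree k.
   Action (x r = r^p x, x [s]_j = [s^p]_{j+1}):
   (theta . m)_k = \sum_{i <= k} theta_i * m_{k-i}^{p^i}. *)
Definition skew_act (p : nat) (theta m : seq R) : seq R :=
  mkseq (fun k => \sum_(i < k.+1) theta`_i * (m`_(k - i)) ^+ (p ^ i))
        (size theta + size m).

(* zero in H(a) = (+)_k R/a^[p^k] *)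
Definition H_zero (p : nat) (a : R -> Prop) (m : seq R) : Prop :=
  forall k, frob_pow a (p ^ k) m`_k.

(* zero in G(a) = (+)_k R/(a^[p^k])^F *)
Definition G_zero (p : nat) (a : R -> Prop) (m : seq R) : Prop :=
  forall k, frob_closure p (frob_pow a (p ^ k)) m`_k.

Definition cx_span (w0 : nat) (c : R) (theta : seq R) : Prop :=
  forall n, ((n < w0)%N -> theta`_n = 0) /\
            ((w0 <= n)%N -> exists r, theta`_n = r * c).

End CharPDefs.

(* Main.v *)
Require Import Defs.
From HB Require Import structures.
From mathcomp Require Import all_boot all_order all_algebra.
From mathcomp Require Import zify.
Import GRing.Theory.
Local Open Scope ring_scope.

Section Helpers.
Local Set Implicit Arguments.
Local Unset Strict Implicit.

Lemma pnat_pow (R : comNzRingType) p e : p \in [pchar R] -> [pchar R].-nat (p ^ e)%N.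
Proof. move=> H. by rewrite pnatX (pnatE _ (pcharf_prime H)) H. Qed.

Lemma pchar_gt0 {R : comNzRingType} {p : nat} : p \in [pchar R] -> (0 < p)%N.
Proof. by move=> H; rewrite prime_gt0 // (pcharf_prime H). Qed.

Lemma zero_pow (R : comNzRingType) p e : p \in [pchar R] -> (0 : R) ^+ (p ^ e)%N = 0.
Proof. by move=> H; rewrite expr0n expn_eq0 eqn0Ngt (pchar_gt0 H). Qed.

Lemma ideal_gen_ideal (R : comNzRingType) (S : R -> Prop) : is_ideal (ideal_gen S).
Proof.
split.
- by exists [::]; rewrite big_nil.
- move=> x y [s [Hs ->]] [t [Ht ->]]; exists (s ++ t); split; last by rewrite big_cat.
  by move=> u; rewrite mem_cat => /orP [/Hs|/Ht].
- move=> r x [s [Hs ->]]; exists [seq (r * u.1, u.2) | u <- s]; split.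
  + by move=> u /mapP [v /Hs Hv ->].
  + rewrite big_map big_distrr /=; apply: eq_bigr => u _; by rewrite mulrA.
Qed.

Lemma frob_pow_ideal (R : comNzRingType) (a : R -> Prop) q : is_ideal (frob_pow a q).
Proof. exact: ideal_gen_ideal. Qed.

Lemma ideal_gen_min (R : comNzRingType) (S I : R -> Prop) :
  is_ideal I -> (forall x, S x -> I x) -> forall x, ideal_gen S x -> I x.
Proof.
move=> [I0 ID IM] HS x [s [Hs ->]].
elim: s Hs => [|u s IH] Hs; first by rewrite big_nil.
rewrite big_cons; apply: ID.
- by apply: (IM); apply: HS; apply: Hs; rewrite mem_head.
- by apply: IH => v Hv; apply: Hs; rewrite in_cons Hv orbT.
Qed.

Lemma ideal_gen_gen (R : comNzRingType) (S : R -> Prop) x : S x -> ideal_gen S x.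
Proof. move=> Sx; exists [:: (1, x)]; split; last by rewrite big_seq1 mul1r.
by move=> u; rewrite mem_seq1 => /eqP ->.
Qed.

Lemma ideal_sum (R : comNzRingType) (I : R -> Prop) n (F : 'I_n -> R) :
  is_ideal I -> (forall i, I (F i)) -> I (\sum_(i < n) F i).
Proof.
move=> [I0 ID IM] HF; apply: (big_ind I) => //.
Qed.

Lemma ideal_gen_frob (R : comNzRingType) p e (S : R -> Prop) x :
  p \in [pchar R] -> ideal_gen S x ->
  ideal_gen (fun y => exists s, S s /\ y = s ^+ (p ^ e)) (x ^+ (p ^ e)).
Proof.
move=> Hp [s [Hs ->]]; exists [seq (u.1 ^+ (p ^ e), u.2 ^+ (p ^ e)) | u <- s]; split.
- by move=> u /mapP [v /Hs Hv ->]; exists v.2.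
- rewrite big_map; elim: s {Hs} => [|u s IH]; first by rewrite !big_nil zero_pow.
  by rewrite !big_cons exprDn_pchar ?pnat_pow // IH exprMn.
Qed.

Lemma frob_pow_frob (R : comNzRingType) p e (a : R -> Prop) q x :
  p \in [pchar R] -> frob_pow a q x -> frob_pow a (q * p ^ e) (x ^+ (p ^ e)).
Proof.
move=> Hp Hx; have := ideal_gen_frob e Hp Hx.
apply: ideal_gen_min; first exact: ideal_gen_ideal.
move=> y [s [[r [ar ->]] ->]]; apply: ideal_gen_gen; exists r; split => //.
by rewrite -exprM.
Qed.

Lemma frob_pow_comp (R : comNzRingType) p e (a : R -> Prop) q x :
  p \in [pchar R] -> frob_pow (frob_pow a q) (p ^ e) x -> frob_pow a (q * p ^ e) x.
Proof.
move=> Hp; apply: ideal_gen_min; first exact: ideal_gen_ideal.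
move=> y [s [Hs ->]]; exact: frob_pow_frob.
Qed.

Lemma frob_pow_decomp (R : comNzRingType) (a : R -> Prop) q q' x :
  frob_pow a (q * q') x -> frob_pow (frob_pow a q) q' x.
Proof.
apply: ideal_gen_min; first exact: ideal_gen_ideal.
move=> y [r [ar ->]]; apply: ideal_gen_gen; exists (r ^+ q); split.
- by apply: ideal_gen_gen; exists r.
- by rewrite exprM.
Qed.

Lemma frob_closure_ideal (R : comNzRingType) p (I : R -> Prop) :
  p \in [pchar R] -> is_ideal (frob_closure p I).
Proof.
move=> Hp; have p0 : (0 < p)%N by rewrite prime_gt0 // (pcharf_prime Hp).
split.
- by exists 0%N; rewrite zero_pow //; case: (frob_pow_ideal I (p ^ 0)).
- move=> x y; rewrite /frob_closure => -[n Hx] [n' Hy]; exists (n + n')%N.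
  rewrite (exprDn_pchar _ _ (pnat_pow (n + n') Hp)); case: (frob_pow_ideal I (p ^ (n + n'))) => _ ID _.
  apply: ID.
  + by rewrite expnD exprM; apply: frob_pow_frob.
  + by rewrite addnC expnD exprM; apply: frob_pow_frob.
- move=> r x; rewrite /frob_closure => -[n Hx]; exists n; rewrite exprMn.
  by case: (frob_pow_ideal I (p ^ n)) => _ _ IM; apply: (IM).
Qed.

Lemma Rcirc1 (R : comNzRingType) : Rcirc (1 : R).
Proof. by move=> P [[_ H1 _] _]. Qed.

Lemma Rcirc_pow (R : comNzRingType) (c : R) k : Rcirc c -> Rcirc (c * c ^+ k).
Proof.
move=> Hc P HP; have [[_ H1 Hpr] _] := HP.
have Hk : forall k, P (c ^+ k) -> P c.
  elim=> [|k' IH]; first by rewrite expr0 => /H1.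
  by rewrite exprS => /Hpr [] // /IH.
by move=> /Hpr [|/Hk]; apply: Hc.
Qed.

Lemma frob_closure_tight (R : comNzRingType) p (I : R -> Prop) y :
  p \in [pchar R] -> frob_closure p I y -> tight_closure p I y.
Proof.
move=> Hp [e He]; exists 1; split; first exact: Rcirc1.
exists e => n Hn; rewrite mul1r -(subnKC Hn) expnD exprM.
exact: frob_pow_frob.
Qed.

Definition unit_theta (R : comNzRingType) (j : nat) (c : R) := rcons (nseq j 0) c.

Lemma unit_theta_nth (R : comNzRingType) j (c : R) i :
  (unit_theta j c)`_i = if i == j then c else 0.
Proof.
rewrite /unit_theta nth_rcons size_nseq nth_nseq.
case: ltngtP => //; by rewrite ?if_same.
Qed.

Lemma skew_unit (R : comNzRingType) p j (c : R) (m : seq R) n :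
  p \in [pchar R] ->
  (skew_act p (unit_theta j c) m)`_(n + j) = c * m`_n ^+ (p ^ j).
Proof.
move=> Hp; rewrite /skew_act; case: (ltnP (n + j) (size (unit_theta j c) + size m)) => Hs.
- rewrite nth_mkseq //.
  have Hj : (j < (n + j).+1)%N by rewrite ltnS leq_addl.
  rewrite (bigD1 (Ordinal Hj)) //= big1 ?addr0.
  + by rewrite unit_theta_nth eqxx addnK.
  + move=> i /eqP Hi; rewrite unit_theta_nth; case: eqP => [Eij|]; last by rewrite mul0r.
    by exfalso; apply: Hi; apply: val_inj.
- have Hm : (size m <= n)%N.
    by move: Hs; rewrite /unit_theta size_rcons size_nseq; lia.
  by rewrite nth_default ?size_mkseq // (nth_default 0 Hm) zero_pow // mulr0.
Qed.

End Helpers.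

Theorem proposition2p4 (R : comNzRingType) (p w0 : nat) (c : R) (a : R -> Prop) :
  noetherian R -> p \in [pchar R] ->
  weak_test_element p w0 c -> is_ideal a ->
  (* (i) ann_{H(a)} ((+)_{n>=w0} R c x^n) = (+)_n (a^[p^n])^* / a^[p^n] *)
  (forall m : seq R,
     (forall theta, cx_span w0 c theta -> H_zero p a (skew_act p theta m)) <->
     (forall n, tight_closure p (frob_pow a (p ^ n)) m`_n)) /\
  (* (ii) ann_{G(a)} ((+)_{n>=0} R c x^n) = (+)_n (a^[p^n])^* / (a^[p^n])^F *)
  (forall m : seq R,
     (forall theta, cx_span 0 c theta -> G_zero p a (skew_act p theta m)) <->
     (forall n, tight_closure p (frob_pow a (p ^ n)) m`_n)).
Proof.
move=> _ Hp [Hc Hwt] Ha.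
have I0 : forall b : R -> Prop, is_ideal b -> b 0 by move=> b [].
have IM : forall b : R -> Prop, is_ideal b -> forall r x, b x -> b (r * x) by move=> b [].
have pw0 : (0 < p ^ w0)%N by rewrite expn_gt0 (pchar_gt0 Hp).
split => m; split.
- move=> Hann n.
  apply/(Hwt _ _ (frob_pow_ideal a (p ^ n))) => j Hj.
  have Hth : cx_span w0 c (unit_theta j c).
    move=> i; split => Hi; rewrite unit_theta_nth.
    + case: eqP => // Eij; subst i; lia.
    + by case: eqP => _; [exists 1; rewrite mul1r | exists 0; rewrite mul0r].
  have := Hann _ Hth (n + j)%N.
  rewrite skew_unit // expnD => H; exact: frob_pow_decomp.
- move=> Hm theta Hth k; rewrite /skew_act.
  case: (ltnP k (size theta + size m)) => Hk; last first.
    by rewrite nth_default ?size_mkseq //; apply: (I0); apply: frob_pow_ideal.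
  rewrite nth_mkseq //; apply: ideal_sum; first exact: frob_pow_ideal.
  move=> i; have Hik : (i <= k)%N by rewrite -ltnS ltn_ord.
  case: (Hth i) => H1 H2; case: (ltnP i w0) => Hiw.
  + by rewrite H1 // mul0r; apply: (I0); apply: frob_pow_ideal.
  + have [r ->] := H2 Hiw; rewrite -mulrA; apply: (IM); first exact: frob_pow_ideal.
    have := (Hwt _ _ (frob_pow_ideal a (p ^ (k - i)))).1 (Hm (k - i)%N) i Hiw.
    move/(frob_pow_comp Hp); by rewrite -expnD subnK.
- move=> Hann n.
  exists (c * c ^+ (p ^ w0)); split; first exact: Rcirc_pow.
  exists w0 => k Hk.
  have Hth : cx_span 0 c (unit_theta (k - w0) c).
    move=> i; split => // _; rewrite unit_theta_nth.
    by case: eqP => _; [exists 1; rewrite mul1r | exists 0; rewrite mul0r].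
  have := Hann _ Hth (n + (k - w0))%N.
  rewrite skew_unit // => Hy.
  have Ht := frob_closure_tight Hp Hy.
  have := (Hwt _ _ (frob_pow_ideal a _)).1 Ht w0 (leqnn w0).
  move/(frob_pow_comp Hp) => H.
  apply: frob_pow_decomp.
  have E1 : (p ^ n * p ^ k = p ^ (n + (k - w0)) * p ^ w0)%N.
    by rewrite -!expnD; congr (_ ^ _)%N; lia.
  have E2 : c * c ^+ (p ^ w0) * m`_n ^+ (p ^ k) = c * (c * m`_n ^+ (p ^ (k - w0))) ^+ (p ^ w0).
    by rewrite exprMn -exprM -expnD subnK // mulrA.
  by rewrite E1 E2.
- move=> Hm theta Hth k; rewrite /skew_act.
  have Hid := frob_closure_ideal (frob_pow a (p ^ k)) Hp.
  case: (ltnP k (size theta + size m)) => Hk; last first.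
    by rewrite nth_default ?size_mkseq //; apply: (I0).
  rewrite nth_mkseq //; apply: ideal_sum => //.
  move=> i; have Hik : (i <= k)%N by rewrite -ltnS ltn_ord.
  have [r ->] := (Hth i).2 (leq0n _); rewrite -mulrA; apply: (IM) => //.
  exists w0.
  have := (Hwt _ _ (frob_pow_ideal a (p ^ (k - i)))).1 (Hm (k - i)%N) (i + w0)%N (leq_addl _ _).
  move/(frob_pow_comp Hp) => H.
  apply: frob_pow_decomp.
  have Ec : c ^+ (p ^ w0) = c ^+ (p ^ w0).-1 * c by rewrite -exprSr prednK.
  rewrite exprMn -exprM -expnD Ec -mulrA; apply: (IM); first exact: frob_pow_ideal.
  move: H; rewrite -!expnD.
  have -> : (k - i + (i + w0) = k + w0)%N by lia.
  done.
Qed.
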